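(* Let $I=(i_1<i_2<\cdots<i_r)$ be strictly increasing with $r\geq1$, and let $\chi_I=\sum_{\varepsilon\in\{0,1\}^r}a_I^\varepsilon w_I^\varepsilon$ with $a_I^\varepsilon\in\mathcal B$. Then: (A) if $\beta(\chi_I)=\gamma(\chi_I)$, then $\chi_I=aS_I$ for some $a\in\mathcal B$; (B) if $\beta(\chi_I)=0$, then $\chi_I=0$; (C) if $\beta(\chi_I)=\delta(\chi_I)$, then $\chi_I\in\mathcal B\otimes1\otimes\land W$.
   Context: $\mathcal B$ is a graded commutative rational algebra and $W$ a graded rational vector space concentrated in odd degrees with basis $\{w_i\}$ indexed by a totally ordered set. In $\mathcal B\otimes\land W\otimes\land W$ write $w_i^0=w_i=1\otimes w_i\otimes1$, $w_i^1=w'_i=1\otimes1\otimes w_i$, $w_I^\varepsilon=w_{i_1}^{\epsilon_1}\cdots w_{i_r}^{\epsilon_r}$, and $S_I=(w_{i_1}+w'_{i_1})\cdots(w_{i_r}+w'_{i_r})$. In $\mathcal B\otimes\land W^{\otimes3}$ write $w,w',w''$ for $w$ in the three copies. Algebra maps $\alpha,\beta,\gamma,\delta\colon\mathcal B\otimes\land W\otimes\land W\to\mathcal B\otimes\land W\otimes\land W\otimes\land W$, identity on $\mathcal B$: $\alpha(w)=w,\alpha(w')=w'$; $\beta(w)=w+w',\beta(w')=w''$; $\gamma(w)=w,\gamma(w')=w'+w''$; $\delta(w)=w',\delta(w')=w''$. *)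

(* Defs.v *)
From HB Require Import structures.
From mathcomp Require Import all_boot all_order all_algebra.
Set Implicit Arguments. Unset Strict Implicit. Unset Printing Implicit Defensive.
Import Order.TTheory GRing.Theory Num.Theory.
Local Open Scope ring_scope.

(* Bd n is the homogeneous component of degree n. *)
Definition graded_comm (B : algType rat) (Bd : nat -> pred B) : Prop :=
  [/\ (forall n, (0 : B) \in Bd n /\
         forall (c : rat) (x y : B), x \in Bd n -> y \in Bd n -> c *: x + y \in Bd n),
      (forall b : B, exists (N : nat) (bs : nat -> B),
           (forall n, bs n \in Bd n) /\ b = \sum_(n < N) bs n),
      (forall (N : nat) (bs : nat -> B), (forall n, bs n \in Bd n) ->
           \sum_(n < N) bs n = 0 -> forall n, (n < N)%N -> bs n = 0),
      (1 : B) \in Bd 0%N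
    & forall (m n : nat) (x y : B), x \in Bd m -> y \in Bd n ->
           x * y \in Bd (m + n)%N /\ x * y = (-1) ^+ (m * n) * (y * x) ].

(* An element of Lambda(X) (over Z) is given by its coordinates on the basis
   e_A (A : {set X}), where e_A is the product of the generators of A taken in
   the enumeration order of X. *)
Definition ext (X : finType) := {ffun {set X} -> int}.

(* sign of e_A e_B = sgn A B e_(A :|: B) for disjoint A B *)
Definition sgn (X : finType) (A C : {set X}) : int :=
  (-1) ^+ #|[set p in setX A C | (enum_rank p.2 < enum_rank p.1)%N]|.

Definition extmul (X : finType) (f g : ext X) : ext X :=
  [ffun D => \sum_(A : {set X}) \sum_(C : {set X} | (A :&: C == set0) && (A :|: C == D))
                sgn A C * f A * g C].
Definition extadd (X : finType) (f g : ext X) : ext X := [ffun D => f D + g D].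
Definition ext1 (X : finType) : ext X := [ffun A => ((A == set0) : nat)%:R].
Definition gen (X : finType) (x : X) : ext X := [ffun A => ((A == [set x]) : nat)%:R].
Definition extprod (X : finType) (s : seq (ext X)) : ext X := foldr (@extmul X) (ext1 X) s.

Definition Bext (B : algType rat) (X : finType) := {ffun {set X} -> B}.
Definition tens (B : algType rat) (X : finType) (b : B) (m : ext X) : Bext B X :=
  [ffun A => b *~ m A].
Definition Bzero (B : algType rat) (X : finType) : Bext B X := [ffun _ => 0].

(* The algebra map B (x) Lambda(X) -> B (x) Lambda(Y), identity on B, sending
   each generator x to phi x (phi x is a linear combination of generators):
   e_A = x1 ... xk (in order) is sent to phi x1 ... phi xk. *)
Definition extmap (X Y : finType) (phi : X -> ext Y) (A : {set X}) : ext Y :=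
  extprod [seq phi x | x <- enum A].
Definition Bmap (B : algType rat) (X Y : finType) (phi : X -> ext Y)
    (chi : Bext B X) : Bext B Y :=
  [ffun D => \sum_(A : {set X}) chi A *~ extmap phi A D].

(* Generators w_{i_j} (j < r) in the copies of W: (j, c) is the copy-c
   version of w_{i_j}.  Two copies: c = 0 (w), c = 1 (w').
   Three copies: c = 0 (w), 1 (w'), 2 (w''). *)
Definition o2_0 : 'I_2 := @Ordinal 2 0 isT.
Definition o2_1 : 'I_2 := @Ordinal 2 1 isT.
Definition o3_0 : 'I_3 := @Ordinal 3 0 isT.
Definition o3_1 : 'I_3 := @Ordinal 3 1 isT.
Definition o3_2 : 'I_3 := @Ordinal 3 2 isT.

Definition X2 (r : nat) := ('I_r * 'I_2)%type.
Definition X3 (r : nat) := ('I_r * 'I_3)%type.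

Definition beta_gen (r : nat) (x : X2 r) : ext (X3 r) :=
  if x.2 == o2_0 then extadd (gen (x.1, o3_0)) (gen (x.1, o3_1)) else gen (x.1, o3_2).
Definition gamma_gen (r : nat) (x : X2 r) : ext (X3 r) :=
  if x.2 == o2_0 then gen (x.1, o3_0) else extadd (gen (x.1, o3_1)) (gen (x.1, o3_2)).
Definition delta_gen (r : nat) (x : X2 r) : ext (X3 r) :=
  if x.2 == o2_0 then gen (x.1, o3_1) else gen (x.1, o3_2).
Definition alpha_gen (r : nat) (x : X2 r) : ext (X3 r) :=
  if x.2 == o2_0 then gen (x.1, o3_0) else gen (x.1, o3_1).

(* w_I^eps = w_{i_1}^{eps_1} ... w_{i_r}^{eps_r}; eps j = true means the primed copy *)
Definition wI (r : nat) (eps : {ffun 'I_r -> bool}) : ext (X2 r) :=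
  extprod [seq gen (j, if eps j then o2_1 else o2_0) | j <- enum 'I_r].

Definition SI (r : nat) : ext (X2 r) :=
  extprod [seq extadd (gen (j, o2_0)) (gen (j, o2_1)) | j <- enum 'I_r].

Definition chiI (B : algType rat) (r : nat) (a : {ffun 'I_r -> bool} -> B) : Bext B (X2 r) :=
  [ffun D => \sum_(eps : {ffun 'I_r -> bool}) a eps *~ wI eps D].

Definition in_B_1_LW (B : algType rat) (r : nat) (chi : Bext B (X2 r)) : Prop :=
  forall A : {set X2 r}, [exists x in A, x.2 == o2_0] -> chi A = 0.

(* Main.v *)
Require Import Defs.
From HB Require Import structures.
From mathcomp Require Import all_boot all_order all_algebra.
From mathcomp Require Import zify.
Import GRing.Theory.
Local Open Scope ring_scope.

Module Helpers.
Set Implicit Arguments. Unset Strict Implicit. Unset Printing Implicit Defensive.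

Lemma rankE (X : finType) (x : X) : (enum_rank x : nat) = index x (enum X).
Proof.
have H := nth_enum_rank x x.
by rewrite -{2}H index_uniq // ?enum_uniq // -cardE ltn_ord.
Qed.

Lemma index_allpairs (I T : eqType) (s1 : seq I) (s2 : seq T) i t :
  i \in s1 -> t \in s2 ->
  index (i, t) [seq (x1, x2) | x1 <- s1, x2 <- s2] = (index i s1 * size s2 + index t s2)%N.
Proof.
move=> + t2; elim: s1 => //= x s1 IH.
rewrite inE index_cat; case: (eqVneq i x) => [->|nix] /=.
  by rewrite map_f // index_map //; move=> a b [].
move=> is1; have -> : ((i, t) \in [seq (x, x2) | x2 <- s2]) = false.
  by apply/negbTE/mapP => -[y _ [e _]]; rewrite e eqxx in nix.
by rewrite size_map IH // mulSn addnA.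
Qed.

Lemma rank_pair (I T : finType) (i i' : I) (t t' : T) :
  (index i (enum I) < index i' (enum I))%N ->
  (enum_rank (i, t) < enum_rank (i', t'))%N.
Proof.
move=> H; rewrite !rankE enumT unlock /= /prod_enum.
rewrite !index_allpairs ?mem_enum //.
have : (index t (enum T) < size (enum T))%N by rewrite index_mem mem_enum.
have : (index t' (enum T) < size (enum T))%N by rewrite index_mem mem_enum.
move: H; move: (index i (enum I)) (index i' (enum I)) (index t (enum T)) (index t' (enum T)) (size (enum T)) => a b x y n *; nia.
Qed.

Lemma extmul_E (X : finType) (f g : ext X) D :
  extmul f g D = \sum_(A : {set X} | A \subset D) sgn A (D :\: A) * f A * g (D :\: A).
Proof.
rewrite ffunE (bigID (fun A : {set X} => A \subset D)) /= [X in _ + X]big1 ?addr0.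
  apply: eq_bigr => A sAD; rewrite (big_pred1 (D :\: A)) // => C /=.
  apply/idP/eqP => [/andP[/eqP dis /eqP <-]|->].
    apply/setP => x; rewrite !inE; case Cx: (x \in C); case Ax: (x \in A) => //=.
    have : x \in A :&: C by rewrite inE Ax Cx.
    by rewrite dis inE.
  apply/andP; split; apply/eqP/setP => x; rewrite !inE; case Ax: (x \in A) => //=.
  by rewrite (subsetP sAD x Ax).
move=> A nAD; apply: big1 => C /andP[_ /eqP E].
by rewrite -E subsetUl in nAD.
Qed.

Definition graph (I T : finType) (f : I -> T) (s : seq I) : {set (I * T)%type} :=
  [set:: [seq (j, f j) | j <- s]].

Lemma graph_cons (I T : finType) (f : I -> T) i s :
  graph f (i :: s) = (i, f i) |: graph f s.
Proof. by rewrite /graph /= set_cons. Qed.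

Lemma mem_graph (I T : finType) (f : I -> T) s i t :
  ((i, t) \in graph f s) = (i \in s) && (t == f i).
Proof.
rewrite /graph inE; apply/mapP/andP => [[j js [-> ->]]|[iis /eqP ->]].
  by rewrite js eqxx.
by exists i.
Qed.

Lemma extprod_graph (I T : finType) (t0 : T) (l : I -> ext (I * T)%type)
  (supp : forall i A, l i A != 0 -> exists t, A = [set (i, t)]) (s : seq I) :
  uniq s -> sorted (fun i i' => (index i (enum I) < index i' (enum I))%N) s ->
  (forall f : I -> T, extprod [seq l i | i <- s] (graph f s) = \prod_(i <- s) l i [set (i, f i)]) /\
  (forall D, [forall f : {ffun I -> T}, D != graph f s] -> extprod [seq l i | i <- s] D = 0).
Proof.
elim: s => [|i s IH] /=.
  move=> _ _; split => [f|D /forallP H].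
    by rewrite /graph /= set_nil ffunE eqxx big_nil.
  by rewrite ffunE; have := H [ffun => t0]; rewrite /graph /= set_nil => /negbTE ->.
move=> /andP[nis us] ps.
have ss : sorted (fun i i' => (index i (enum I) < index i' (enum I))%N) s.
  by move: ps; case: (s) => //= x s' /andP[].
have alls : all (fun j => (index i (enum I) < index j (enum I))%N) s.
  by apply: (order_path_min _ ps) => y x z; apply: ltn_trans.
have [IHa IHb] := IH us ss.
split => [f|D /forallP H].
  rewrite extmul_E graph_cons.
  set D := (i, f i) |: graph f s.
  have Ds : [set (i, f i)] \subset D by rewrite sub1set setU11.
  rewrite (bigD1 [set (i, f i)]) //= big1 ?addr0.
    have -> : D :\: [set (i, f i)] = graph f s.
      apply/setP => -[j u]; rewrite in_setD1 in_setU1. rewrite (mem_graph f s j u).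
      case: eqP => [[-> ->]|] /=; last by [].
      by rewrite (negbTE nis).
    have -> : sgn [set (i, f i)] (graph f s) = 1.
      rewrite /sgn; have -> : [set p in setX [set (i, f i)] (graph f s) |
           (enum_rank p.2 < enum_rank p.1)%N] = set0.
        apply/setP => -[p [j u]]; rewrite !inE /=; apply/negbTE.
        apply/andP => -[/andP[/eqP -> /mapP [j0 js [-> ->]]]].
        by rewrite ltnNge ltnW // rank_pair // (allP alls).
      by rewrite cards0 expr0.
    by rewrite IHa big_cons mul1r.
  move=> A /andP[sAD nA].
  case: (eqVneq (l i A) 0) => [->|/supp [t eA]]; first by rewrite mulr0 mul0r.
  move: sAD; rewrite eA sub1set in_setU1 mem_graph => /orP[/eqP [et]|/andP[iis _]].
    by rewrite eA et eqxx in nA.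
  by rewrite iis in nis.
rewrite extmul_E big1 // => A sAD.
case: (eqVneq (l i A) 0) => [->|/supp [t eA]]; first by rewrite mulr0 mul0r.
case: (eqVneq (extprod [seq l i0 | i0 <- s] (D :\: A)) 0) => [->|nz]; first by rewrite mulr0.
exfalso.
have : ~~ [forall f : {ffun I -> T}, D :\: A != graph f s] by apply: contra nz => /IHb ->.
rewrite negb_forall => /existsP [g]; rewrite negbK => /eqP eg.
pose g' := [ffun j => if j == i then t else g j].
have eD : A :|: (D :\: A) = D.
  apply/setP => x; rewrite !inE; case Ax: (x \in A) => //=.
  by rewrite (subsetP sAD x Ax).
have := H g'; apply/negP; rewrite negbK; apply/eqP.
rewrite graph_cons -eD eg eA ffunE eqxx.
rewrite /graph.
have -> : [seq (j, g' j) | j <- s] = [seq (j, g j) | j <- s].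
  apply/eq_in_map => j js; rewrite ffunE; case: eqP => // ji.
  by rewrite -ji js in nis.
by [].
Qed.

Lemma sorted_ord r :
  sorted (fun i i' : 'I_r => (index i (enum 'I_r) < index i' (enum 'I_r))%N) (enum 'I_r).
Proof.
rewrite (@eq_sorted _ _ (fun i i' : 'I_r => (i < i')%N)); last first.
  by move=> i i'; rewrite !index_enum_ord.
by have := iota_ltn_sorted 0 r; rewrite -val_enum_ord sorted_map.
Qed.

Definition blocky (I T : finType) (j : I) (v : ext (I * T)%type) :=
  forall A, v A != 0 -> exists t, A = [set (j, t)].

Lemma gen_blocky (I T : finType) (j : I) (t : T) : blocky j (gen (j, t)).
Proof. by move=> A; rewrite ffunE; case: (eqVneq A [set (j, t)]) => [-> _|]; [exists t|]. Qed.

Lemma add_blocky (I T : finType) (j : I) (u v : ext (I * T)%type) :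
  blocky j u -> blocky j v -> blocky j (extadd u v).
Proof.
move=> bu bv A; rewrite ffunE.
case: (eqVneq (u A) 0) => [-> | /bu //]; rewrite add0r; exact: bv.
Qed.

Lemma gen1 (X : finType) (x y : X) : gen x [set y] = if y == x then 1 else 0.
Proof. by rewrite ffunE (inj_eq set1_inj); case: eqP. Qed.

Lemma prod_if (I : Type) (s : seq I) (P : pred I) :
  \prod_(j <- s) (if P j then 1 else 0 : int) = if all P s then 1 else 0.
Proof.
elim: s => [|x s IH]; first by rewrite big_nil.
by rewrite big_cons IH /=; case: (P x); rewrite ?mul1r ?mul0r.
Qed.

Lemma gr_eq (T : finType) r (f g : 'I_r -> T) :
  (graph f (enum 'I_r) == graph g (enum 'I_r)) = all (fun j => f j == g j) (enum 'I_r).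
Proof.
apply/eqP/allP => [E j _ | H].
  have : (j, f j) \in graph g (enum 'I_r) by rewrite -E mem_graph mem_enum eqxx.
  by rewrite mem_graph => /andP[_].
rewrite /graph.
have -> : [seq (j, f j) | j <- enum 'I_r] = [seq (j, g j) | j <- enum 'I_r].
  by apply: eq_map => j; rewrite (eqP (H j _)) // mem_enum.
by [].
Qed.

Lemma filter_gr (T : finType) r (c : 'I_r -> T) (s : seq 'I_r) :
  filter (mem (graph c (enum 'I_r))) [seq (x1, x2) | x1 <- s, x2 <- enum T] =
  [seq (j, c j) | j <- s].
Proof.
elim: s => //= x s IH.
rewrite filter_cat IH -cat1s; congr (_ ++ _).
rewrite filter_map /= (@eq_filter _ _ (pred1 (c x))); last first.
  by move=> t; rewrite /preim /= (mem_graph c (enum 'I_r) x t) mem_enum.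
by rewrite filter_pred1_uniq ?enum_uniq ?mem_enum.
Qed.

Lemma enum_gr (T : finType) r (c : 'I_r -> T) :
  enum (graph c (enum 'I_r)) = [seq (j, c j) | j <- enum 'I_r].
Proof.
rewrite {1}/enum_mem -enumT.
rewrite (_ : enum {: 'I_r * T} = prod_enum 'I_r T); last by rewrite enumT unlock.
exact: filter_gr.
Qed.

Definition ceps r (e : {ffun 'I_r -> bool}) (j : 'I_r) : 'I_2 := if e j then o2_1 else o2_0.

Lemma wI_E r (e : {ffun 'I_r -> bool}) A :
  wI e A = if A == graph (ceps e) (enum 'I_r) then 1 else 0.
Proof.
have [Ha Hb] := extprod_graph o2_0 (l := fun j => gen (j, ceps e j))
  (fun j => @gen_blocky _ _ j _) (enum_uniq 'I_r) (sorted_ord r).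
case: (boolP [forall f : {ffun 'I_r -> 'I_2}, A != graph f (enum 'I_r)]) => [nA|].
  have -> : wI e A = 0 by exact: Hb.
  case: eqP => // eA; move/forallP: nA => /(_ [ffun j => ceps e j]).
  rewrite eA gr_eq => /negP []; apply/allP => j _; by rewrite ffunE.
rewrite negb_forall => /existsP [f]; rewrite negbK => /eqP ->.
have -> : wI e (graph f (enum 'I_r)) =
   \prod_(j <- enum 'I_r) gen (j, ceps e j) [set (j, f j)] by exact: Ha.
under eq_bigr => j _ do rewrite gen1 xpair_eqE eqxx /=.
by rewrite prod_if gr_eq.
Qed.

Lemma Bmap_chi (B : algType rat) r (a : {ffun 'I_r -> bool} -> B)
  (phi : X2 r -> ext (X3 r)) D :
  Bmap phi (chiI a) D =
  \sum_(e : {ffun 'I_r -> bool}) a e *~ extmap phi (graph (ceps e) (enum 'I_r)) D.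
Proof.
rewrite ffunE.
under eq_bigr => A _ do rewrite ffunE mulrz_suml.
rewrite exchange_big /=; apply: eq_bigr => e _.
rewrite (bigD1 (graph (ceps e) (enum 'I_r))) //= big1 ?addr0.
  by rewrite wI_E eqxx mulr1z.
by move=> A /negbTE nA; rewrite wI_E nA mulr0z mul0rz.
Qed.

Lemma extmap_gr r (phi : X2 r -> ext (X3 r)) (e : {ffun 'I_r -> bool}) (g : 'I_r -> 'I_3)
  (Hs : forall j c, blocky j (phi (j, c))) :
  extmap phi (graph (ceps e) (enum 'I_r)) (graph g (enum 'I_r)) =
  \prod_(j <- enum 'I_r) phi (j, ceps e j) [set (j, g j)].
Proof.
rewrite /extmap enum_gr -map_comp.
have [Ha _] := extprod_graph o3_0 (l := fun j => phi (j, ceps e j))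
  (fun j => Hs j (ceps e j)) (enum_uniq 'I_r) (sorted_ord r).
exact: Ha.
Qed.

Lemma Bmap_gr (B : algType rat) r (a : {ffun 'I_r -> bool} -> B)
  (phi : X2 r -> ext (X3 r)) (v : bool -> 'I_3 -> bool)
  (Hs : forall j c, blocky j (phi (j, c)))
  (Hv : forall j b t, phi (j, if b then o2_1 else o2_0) [set (j, t)] = if v b t then 1 else 0)
  (g : 'I_r -> 'I_3) :
  Bmap phi (chiI a) (graph g (enum 'I_r)) =
  \sum_(e : {ffun 'I_r -> bool}) a e *~ (if all (fun j => v (e j) (g j)) (enum 'I_r) then 1 else 0).
Proof.
rewrite Bmap_chi; apply: eq_bigr => e _; rewrite extmap_gr //.
under eq_bigr => j _ do rewrite /ceps Hv.
by rewrite prod_if.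
Qed.

Lemma pick_sum (B : algType rat) r (a : {ffun 'I_r -> bool} -> B) (e0 : {ffun 'I_r -> bool})
  (P : {ffun 'I_r -> bool} -> bool) (HP : forall e, P e = (e == e0)) :
  \sum_(e : {ffun 'I_r -> bool}) a e *~ (if P e then 1 else 0) = a e0.
Proof.
rewrite (bigD1 e0) //= HP eqxx mulr1z big1 ?addr0 // => e ne.
by rewrite HP (negbTE ne) mulr0z.
Qed.

Lemma all_ffun r (h : 'I_r -> bool) (e : {ffun 'I_r -> bool}) :
  all (fun j => e j == h j) (enum 'I_r) = (e == [ffun j => h j]).
Proof.
apply/allP/eqP => [H | ->]; last by move=> j _; rewrite ffunE.
by apply/ffunP => j; rewrite ffunE; apply/eqP/H; rewrite mem_enum.
Qed.

Lemma I3P (t : 'I_3) : [\/ t = o3_0, t = o3_1 | t = o3_2].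
Proof.
case: t => [[|[|[|k]]] Ht]; [constructor 1|constructor 2|constructor 3|] => //;
  by apply: val_inj.
Qed.

Lemma I2P (t : 'I_2) : t = o2_0 \/ t = o2_1.
Proof. case: t => [[|[|k]]] Ht; [left|right|] => //; by apply: val_inj. Qed.


Lemma beta_blocky r j c : blocky j (@beta_gen r (j, c)).
Proof.
rewrite /beta_gen /=; case: ifP => _; last exact: gen_blocky.
by apply: add_blocky; apply: gen_blocky.
Qed.

Lemma gamma_blocky r j c : blocky j (@gamma_gen r (j, c)).
Proof.
rewrite /gamma_gen /=; case: ifP => _; first exact: gen_blocky.
by apply: add_blocky; apply: gen_blocky.
Qed.

Lemma delta_blocky r j c : blocky j (@delta_gen r (j, c)).
Proof. by rewrite /delta_gen /=; case: ifP => _; apply: gen_blocky. Qed.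

Lemma beta_v r (j : 'I_r) b t :
  beta_gen (j, if b then o2_1 else o2_0) [set (j, t)] = if b == (t == o3_2) then 1 else 0.
Proof.
rewrite /beta_gen /=; case: b => /=; last rewrite ffunE; rewrite !gen1 !xpair_eqE eqxx /=;
  by case: (I3P t) => ->.
Qed.

Lemma gamma_v r (j : 'I_r) b t :
  gamma_gen (j, if b then o2_1 else o2_0) [set (j, t)] = if b == (t != o3_0) then 1 else 0.
Proof.
rewrite /gamma_gen /=; case: b => /=; first rewrite ffunE; rewrite !gen1 !xpair_eqE eqxx /=;
  by case: (I3P t) => ->.
Qed.

Lemma delta_v r (j : 'I_r) b t :
  delta_gen (j, if b then o2_1 else o2_0) [set (j, t)] =
  if (if b then t == o3_2 else t == o3_1) then 1 else 0.
Proof.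
rewrite /delta_gen /=; case: b => /=; rewrite !gen1 !xpair_eqE eqxx /=;
  by case: (I3P t) => ->.
Qed.

Lemma SI_E r D : SI r D = \sum_(e : {ffun 'I_r -> bool}) wI e D.
Proof.
have [Ha Hb] := extprod_graph o2_0 (l := fun j => extadd (gen (j, o2_0)) (gen (j, o2_1)))
  (fun j => add_blocky (@gen_blocky _ _ j o2_0) (@gen_blocky _ _ j o2_1)) (enum_uniq 'I_r) (sorted_ord r).
case: (boolP [forall f : {ffun 'I_r -> 'I_2}, D != graph f (enum 'I_r)]) => [nD|].
  have -> : SI r D = 0 by exact: Hb.
  symmetry; apply: big1 => e _; rewrite wI_E; case: eqP => // eD.
  move/forallP: nD => /(_ [ffun j => ceps e j]); rewrite eD gr_eq => /negP [].
  by apply/allP => j _; rewrite ffunE.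
rewrite negb_forall => /existsP [f]; rewrite negbK => /eqP ->.
have -> : SI r (graph f (enum 'I_r)) = \prod_(j <- enum 'I_r)
    extadd (gen (j, o2_0)) (gen (j, o2_1)) [set (j, f j)] by exact: Ha.
rewrite big1 => [|j _]; last first.
  by rewrite ffunE !gen1 !xpair_eqE eqxx /=; case: (I2P (f j)) => ->.
have HP : forall e, all (fun j => f j == ceps e j) (enum 'I_r) = (e == [ffun j => f j == o2_1]).
  move=> e; rewrite -all_ffun; apply: eq_all => j; rewrite /ceps.
  by case: (e j); case: (I2P (f j)) => ->.
under eq_bigr => e _ do rewrite wI_E gr_eq HP.
by rewrite (bigD1 [ffun j => f j == o2_1]) //= eqxx big1 ?addr0 // => e /negbTE ->.
Qed.

Lemma pick_all (B : algType rat) r (a : {ffun 'I_r -> bool} -> B) (h : 'I_r -> bool)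
  (e0 : {ffun 'I_r -> bool}) (Hh : [ffun j => h j] = e0) :
  \sum_(e : {ffun 'I_r -> bool}) a e *~ (if all (fun j => e j == h j) (enum 'I_r) then 1 else 0)
  = a e0.
Proof. by apply: pick_sum => e; rewrite all_ffun Hh. Qed.

End Helpers.
Import Helpers.

Theorem mainTheorem10 (B : algType rat) (Bd : nat -> pred B) (HB : graded_comm Bd)
    (r : nat) (hr : (0 < r)%N) (a : {ffun 'I_r -> bool} -> B) :
  [/\ (Bmap (@beta_gen r) (chiI a) = Bmap (@gamma_gen r) (chiI a) ->
         exists a0 : B, chiI a = tens a0 (SI r)),
      (Bmap (@beta_gen r) (chiI a) = Bzero B (X3 r) -> chiI a = Bzero B (X2 r))
    & (Bmap (@beta_gen r) (chiI a) = Bmap (@delta_gen r) (chiI a) -> in_B_1_LW (chiI a)) ].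
Proof.
have Hbeta := Bmap_gr a (v := fun b t => b == (t == o3_2)) (@beta_blocky r) (@beta_v r).
have Hgamma := Bmap_gr a (v := fun b t => b == (t != o3_0)) (@gamma_blocky r) (@gamma_v r).
have Hdelta := Bmap_gr a (v := fun b t => if b then t == o3_2 else t == o3_1)
  (@delta_blocky r) (@delta_v r).
split.
- move=> H.
  have Ha : forall e, a e = a [ffun => false].
    move=> e; pose g (j : 'I_r) := if e j then o3_1 else o3_0.
    have := congr1 (fun F : Bext B (X3 r) => F (graph g (enum 'I_r))) H => /=.
    move=> E; move: (etrans (esym (Hbeta g)) (etrans E (Hgamma g))).
    rewrite (pick_all a (h := fun j => g j == o3_2) (e0 := [ffun => false])); last first.
      by apply/ffunP => j; rewrite !ffunE /g; case: (e j).
    rewrite (pick_all a (h := fun j => g j != o3_0) (e0 := e)) //.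
    by apply/ffunP => j; rewrite !ffunE /g; case: (e j).
  exists (a [ffun => false]); apply/ffunP => D; rewrite !ffunE SI_E mulrz_sumr.
  by apply: eq_bigr => e _; rewrite Ha.
- move=> H; apply/ffunP => D; rewrite !ffunE; apply: big1 => e _.
  suff -> : a e = 0 by rewrite mul0rz.
  pose g (j : 'I_r) := if e j then o3_2 else o3_0.
  have := congr1 (fun F : Bext B (X3 r) => F (graph g (enum 'I_r))) H => /=.
  move=> E; move: (etrans (esym (Hbeta g)) E).
  rewrite (pick_all a (h := fun j => g j == o3_2) (e0 := e)) ?ffunE //.
  by apply/ffunP => j; rewrite !ffunE /g; case: (e j).
- move=> H A /existsP [x /andP [xA x2]]; rewrite ffunE; apply: big1 => e _.
  case: (boolP [forall j, e j]) => [/forallP allt | ].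
    rewrite wI_E; case: eqP => [eA|]; last by rewrite mulr0z.
    exfalso; move: xA x2; rewrite eA; case: x => j c /=.
    rewrite (mem_graph (ceps e) (enum 'I_r) j c) => /andP [_ /eqP ->].
    by rewrite /ceps allt.
  rewrite negb_forall => /existsP [j0 nj0].
  suff -> : a e = 0 by rewrite mul0rz.
  pose g (j : 'I_r) := if e j then o3_2 else o3_0.
  have := congr1 (fun F : Bext B (X3 r) => F (graph g (enum 'I_r))) H => /=.
  move=> E; move: (etrans (esym (Hbeta g)) (etrans E (Hdelta g))).
  rewrite (pick_all a (h := fun j => g j == o3_2) (e0 := e)); last first.
    by apply/ffunP => j; rewrite !ffunE /g; case: (e j).
  move=> ->; apply: big1 => e' _.
  rewrite (_ : all _ _ = false) ?mulr0z //.
  have jin : j0 \in enum 'I_r by rewrite mem_enum.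
  apply/negbTE/allP => /(_ j0 jin).
  by rewrite /g (negbTE nj0); case: (e' j0).
Qed.
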